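(* Let $R>0$, $K>0$, $B_i>0$, $C_i\ge0$, $\alpha\in[0,1)$ and $c\ge0$ with $\alpha>0$ or $c>0$. For $(p,m)$ in $S=\{(p,m): p\ge0,\ m\ge0,\ p+m\le B_i\}$ define $$U_i(p,m)=\frac{\big((1-\alpha)p+m\big)R}{K+p+m}-c\,e^{-p}\,\mathbf{1}[p>0]-C_i\,\mathbf{1}[m>0].$$ Then every maximizer $(p^*,m^* )$ of $U_i$ over $S$ with $(p^*,m^* )\neq(0,0)$ satisfies $(p^*,m^* )\in\{(B_i,0),(0,B_i)\}$; i.e., a participating stakeholder's best response is to invest all its stakes either in the pool or for self-mining.
   Context: Setting: a proof-of-stake blockchain with one stake pool (own stake $\sigma>0$, announced cost parameter $c$ and fee $\alpha$) and $N$ stakeholders. Stakeholder $i$ has budget $B_i$ and operational cost $C_i$, and chooses $p$ stakes to invest in the pool and $m$ stakes for self-mining with $p+m\le B_i$; the block reward is $R$. $K$ is the total stake of the pool owner and all other stakeholders (held fixed), so the total network stake is $K+p+m$. Investing $p>0$ in the pool yields expected reward $\frac{p}{K+p+m}(1-\alpha)R-c\,e^{-p}$; self-mining with $m>0$ yields $\frac{m}{K+p+m}R-C_i$; not participating ($p=m=0$) yields $0$. *)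

(* Defs.v *)
From Stdlib Require Import Reals.
Open Scope R_scope.

Definition ind_pos (x : R) : R := if Rlt_dec 0 x then 1 else 0.

Definition feasible (B p m : R) : Prop := 0 <= p /\ 0 <= m /\ p + m <= B.

Definition utility (Rw K alpha c Ci p m : R) : R :=
  ((1 - alpha) * p + m) * Rw / (K + p + m)
  - c * exp (- p) * ind_pos p - Ci * ind_pos m.

Definition is_maximizer (Rw K alpha c Ci B ps ms : R) : Prop :=
  feasible B ps ms /\
  forall p m, feasible B p m ->
    utility Rw K alpha c Ci p m <= utility Rw K alpha c Ci ps ms.

(* Main.v *)
Require Import Defs.
From Stdlib Require Import Reals Lra.
Open Scope R_scope.

Lemma ind_pos_pos x : 0 < x -> ind_pos x = 1.
Proof. intro h; unfold ind_pos; destruct (Rlt_dec 0 x); lra. Qed.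

Lemma ind_pos_0 : ind_pos 0 = 0.
Proof. unfold ind_pos; destruct (Rlt_dec 0 0); lra. Qed.

Lemma frac_incr K x y : 0 < K -> 0 <= x -> x < y -> x / (K + x) < y / (K + y).
Proof.
  intros hK hx hxy.
  assert (E : y / (K + y) - x / (K + x) = K * (y - x) / ((K + x) * (K + y)))
    by (field; lra).
  assert (0 < K * (y - x) / ((K + x) * (K + y))).
  { apply Rdiv_lt_0_compat. apply Rmult_lt_0_compat; lra.
    apply Rmult_lt_0_compat; lra. }
  lra.
Qed.

Theorem theorem3 (Rw K B Ci alpha c : R)
  (hR : 0 < Rw) (hK : 0 < K) (hB : 0 < B) (hC : 0 <= Ci)
  (ha0 : 0 <= alpha) (ha1 : alpha < 1) (hc : 0 <= c)
  (hac : 0 < alpha \/ 0 < c)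
  (ps ms : R)
  (hmax : is_maximizer Rw K alpha c Ci B ps ms)
  (hnz : ~ (ps = 0 /\ ms = 0)) :
  (ps = B /\ ms = 0) \/ (ps = 0 /\ ms = B).
Proof.
  destruct hmax as [[hp [hm hs]] H].
  unfold utility in H.
  destruct (Rle_lt_or_eq_dec 0 ps hp) as [pp | p0];
  destruct (Rle_lt_or_eq_dec 0 ms hm) as [mp | m0].
  - exfalso.
    assert (Hf : feasible B 0 (ps + ms)) by (unfold feasible; lra).
    specialize (H _ _ Hf).
    rewrite (ind_pos_pos ps pp), (ind_pos_pos ms mp), ind_pos_0,
      (ind_pos_pos (ps+ms)) in H by lra.
    assert (E : ((1 - alpha) * ps + ms) * Rw / (K + ps + ms)
       = (0 + (ps+ms)) * Rw / (K + 0 + (ps + ms)) - alpha * ps * Rw / (K + ps + ms))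
       by (field; lra).
    rewrite E in H.
    assert (ex : 0 < exp (- ps)) by apply exp_pos.
    assert (h0 : 0 <= alpha * ps * Rw / (K + ps + ms)).
    { apply Rle_mult_inv_pos. apply Rmult_le_pos. apply Rmult_le_pos; lra. lra. lra. }
    assert (h1 : 0 <= c * exp (- ps)) by (apply Rmult_le_pos; lra).
    destruct hac as [ha | hc'].
    + assert (0 < alpha * ps * Rw / (K + ps + ms)).
      { apply Rdiv_lt_0_compat. apply Rmult_lt_0_compat. apply Rmult_lt_0_compat; lra. lra. lra. }
      rewrite Rmult_0_r in H. lra.
    + assert (0 < c * exp (- ps)) by (apply Rmult_lt_0_compat; lra).
      rewrite Rmult_0_r in H. lra.
  - subst ms. left. split; [|reflexivity].
    destruct (Rle_lt_or_eq_dec ps B) as [lt | eq]; [lra| |exact eq].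
    exfalso.
    assert (Hf : feasible B B 0) by (unfold feasible; lra).
    specialize (H _ _ Hf).
    rewrite (ind_pos_pos ps pp), (ind_pos_pos B hB), ind_pos_0 in H.
    assert (fi := frac_incr K ps B hK hp lt).
    assert (E1 : ((1 - alpha) * B + 0) * Rw / (K + B + 0) = (1-alpha)*Rw * (B / (K+B)))
      by (field; lra).
    assert (E2 : ((1 - alpha) * ps + 0) * Rw / (K + ps + 0) = (1-alpha)*Rw * (ps / (K+ps)))
      by (field; lra).
    rewrite E1, E2 in H.
    assert ((1-alpha)*Rw * (ps / (K+ps)) < (1-alpha)*Rw * (B / (K+B))).
    { apply Rmult_lt_compat_l; [apply Rmult_lt_0_compat; lra | exact fi]. }
    assert (exp (- B) <= exp (- ps)).
    { apply Rlt_le, exp_increasing; lra. }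
    assert (c * exp (- B) <= c * exp (- ps)) by (apply Rmult_le_compat_l; lra).
    lra.
  - subst ps. right. split; [reflexivity|].
    destruct (Rle_lt_or_eq_dec ms B) as [lt | eq]; [lra| |exact eq].
    exfalso.
    assert (Hf : feasible B 0 B) by (unfold feasible; lra).
    specialize (H _ _ Hf).
    rewrite (ind_pos_pos ms mp), (ind_pos_pos B hB), ind_pos_0 in H.
    assert (fi := frac_incr K ms B hK hm lt).
    assert (E1 : ((1 - alpha) * 0 + B) * Rw / (K + 0 + B) = Rw * (B / (K+B)))
      by (field; lra).
    assert (E2 : ((1 - alpha) * 0 + ms) * Rw / (K + 0 + ms) = Rw * (ms / (K+ms)))
      by (field; lra).
    rewrite E1, E2 in H.
    assert (Rw * (ms / (K+ms)) < Rw * (B / (K+B))).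
    { apply Rmult_lt_compat_l; [lra | exact fi]. }
    lra.
  - exfalso; apply hnz; split; symmetry; assumption.
Qed.
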